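(* Let $H$ be a locally compact abelian group with topology $\tau$, let $U\subseteq H$ be a neighbourhood of zero, and let $\mathcal{D}=\{f_i:i\in\mathbb{N}\}\subseteq C_c(H)$ be a countable uniformly bounded family of functions. Then there exist a metrisable group $(\widetilde H,\widetilde d)$ and a continuous group homomorphism $\phi:(H,\tau)\to(\widetilde H,\widetilde d)$ with dense range such that: (a) for every $f\in\mathcal{D}$ there exists $\widetilde f\in C_c(\widetilde H)$ with $f=\widetilde f\circ\phi$; (b) there exists a neighbourhood of zero $\widetilde V\subseteq\widetilde H$ such that $\phi^{-1}(\widetilde V)\subseteq U$.
   Context: $C_c(X)$ denotes the space of continuous complex-valued functions with compact support on $X$. *)

(* Defs.v *)
From mathcomp Require Import all_boot all_algebra all_classical all_reals all_analysis.
From mathcomp.real_closed Require Export complex.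
Export Num.Theory GRing.Theory numFieldTopology.Exports.

Set Implicit Arguments.
Unset Strict Implicit.
Unset Printing Implicit Defensive.

Local Open Scope classical_set_scope.
Local Open Scope ring_scope.

(* The complex numbers over a real type R, with their usual (norm) topology:
   (R[i])^o is the regular copy of the numClosedField R[i], which
   MathComp-Analysis equips with the pseudometric topology |x - y|. *)
Notation Cplx R := ((complex R)^o).

Definition compact_support (R : realType) (T : topologicalType)
  (f : T -> Cplx R) : Prop :=
  compact (closure [set x | f x != 0]).

Definition Cc (R : realType) (T : topologicalType) (f : T -> Cplx R) : Prop :=
  continuous f /\ compact_support f.

Definition is_metric (R : realType) (T : Type) (d : T -> T -> R) : Prop :=
  [/\ forall x y, 0 <= d x y,
      forall x y, d x y = 0 <-> x = y,
      forall x y, d x y = d y x &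
      forall x y z, d x z <= d x y + d y z].

Definition metrizes (R : realType) (T : topologicalType) (d : T -> T -> R) : Prop :=
  is_metric d /\
  forall (x : T) (A : set T),
    nbhs x A <-> exists2 e : R, 0 < e & [set y | d x y < e] `<=` A.

Definition group_hom (G K : zmodType) (phi : G -> K) : Prop :=
  forall x y, phi (x + y) = phi x + phi y.

(* Main.v *)
Require Import Defs.
From mathcomp Require Import all_boot all_algebra all_classical all_reals all_analysis.
Import Num.Theory GRing.Theory numFieldTopology.Exports.
Local Open Scope classical_set_scope.
Local Open Scope ring_scope.
Local Open Scope complex_scope.
From HB Require Import structures.
Import order.Order.TTheory.

Section Quot.
Context (R : realType) (H : topologicalZmodType) (rho : H -> R)
  (rho_ge0 : forall x, 0 <= rho x) (rho0 : rho 0 = 0)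
  (rhoN : forall x, rho (- x) = rho x)
  (rhoD : forall x y, rho (x + y) <= rho x + rho y).

Lemma rhoB_sym x y : rho (x - y) = rho (y - x).
Proof. by rewrite -rhoN opprB. Qed.

Lemma rho_tri x y z : rho (x - z) <= rho (x - y) + rho (y - z).
Proof. by rewrite (_ : x - z = (x - y) + (y - z)) ?rhoD // addrA subrK. Qed.

Lemma rho_congr x x' y y' : rho (x - x') = 0 -> rho (y - y') = 0 ->
  rho (x - y) = rho (x' - y').
Proof.
move=> hx hy; apply/eqP; rewrite eq_le; apply/andP; split.
  apply: (le_trans (rho_tri x x' y)); rewrite hx add0r.
  by apply: (le_trans (rho_tri x' y' y)); rewrite [rho (y' - y)]rhoB_sym hy addr0.
apply: (le_trans (rho_tri x' x y')); rewrite [rho (x' - x)]rhoB_sym hx add0r.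
by apply: (le_trans (rho_tri x y y')); rewrite hy addr0.
Qed.

Definition canon (x : H) : H := xget 0 [set y | rho (x - y) = 0].

Lemma canonP x : rho (x - canon x) = 0.
Proof. by apply: (@xgetPex _ 0 [set y | rho (x - y) = 0]); by exists x => /=; rewrite subrr. Qed.

Lemma canon_eq x y : rho (x - y) = 0 -> canon x = canon y.
Proof.
move=> hxy; rewrite /canon; congr xget; apply/seteqP; split => z /= h.
  by rewrite -h; apply: rho_congr; rewrite ?subrr // rhoB_sym.
by rewrite -h; apply: rho_congr; rewrite ?subrr.
Qed.

Lemma canonK x : canon (canon x) = canon x.
Proof. by apply: canon_eq; rewrite rhoB_sym canonP. Qed.

Definition Q : Type := let _ := (rho_ge0, rho0, rhoN, rhoD) in {x : H | canon x == x}.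
HB.instance Definition _ := Choice.on Q.

Definition qpi (x : H) : Q := exist _ (canon x) (introT eqP (canonK x)).

Lemma qpi_val (a : Q) : qpi (val a) = a.
Proof. by apply: val_inj => /=; apply/eqP; exact: (valP a). Qed.

Lemma qpi_eq x y : rho (x - y) = 0 -> qpi x = qpi y.
Proof. by move=> h; apply: val_inj => /=; exact: canon_eq. Qed.

Lemma rho_val_qpi x : rho (x - val (qpi x)) = 0.
Proof. exact: canonP. Qed.

Lemma rho0_add x x' y y' : rho (x - x') = 0 -> rho (y - y') = 0 ->
  rho ((x + y) - (x' + y')) = 0.
Proof.
move=> hx hy; apply/eqP; rewrite eq_le rho_ge0 andbT.
rewrite (_ : (x + y) - (x' + y') = (x - x') + (y - y')); last first.
  by rewrite opprD addrACA.
by apply: (le_trans (rhoD _ _)); rewrite hx hy addr0.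
Qed.

Lemma rho0_opp x x' : rho (x - x') = 0 -> rho (- x - - x') = 0.
Proof. by move=> h; rewrite -opprD rhoN. Qed.

Definition qzero : Q := qpi 0.
Definition qadd (a b : Q) : Q := qpi (val a + val b).
Definition qopp (a : Q) : Q := qpi (- val a).

Lemma qaddE x y : qadd (qpi x) (qpi y) = qpi (x + y).
Proof.
apply: qpi_eq; apply: rho0_add; rewrite rhoB_sym; exact: rho_val_qpi.
Qed.

Lemma qoppE x : qopp (qpi x) = qpi (- x).
Proof. apply: qpi_eq; apply: rho0_opp; rewrite rhoB_sym; exact: rho_val_qpi. Qed.

Lemma qaddA : associative qadd.
Proof.
move=> a b c; rewrite -[a]qpi_val -[b]qpi_val -[c]qpi_val.
by rewrite !qaddE addrA.
Qed.

Lemma qaddC : commutative qadd.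
Proof. by move=> a b; rewrite /qadd addrC. Qed.

Lemma qadd0 : left_id qzero qadd.
Proof. by move=> a; rewrite -[a]qpi_val /qzero qaddE add0r. Qed.

Lemma qaddN : left_inverse qzero qopp qadd.
Proof. by move=> a; rewrite -[a]qpi_val qoppE qaddE addNr. Qed.

HB.instance Definition _ := GRing.isZmodule.Build Q qaddA qaddC qadd0 qaddN.

Lemma qpiD x y : qpi (x + y) = qpi x + qpi y.
Proof. by rewrite -qaddE. Qed.

Lemma qpiN x : qpi (- x) = - qpi x.
Proof. by rewrite -qoppE. Qed.

Definition qd (a b : Q) : R := rho (val a - val b).

Lemma qdxx a : qd a a = 0.
Proof. by rewrite /qd subrr. Qed.

Lemma qd_pos a b : qd a b = 0 -> a = b.
Proof. by move=> h; rewrite -[a]qpi_val -[b]qpi_val; apply: qpi_eq. Qed.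

Lemma qd_sym a b : qd a b = qd b a.
Proof. exact: rhoB_sym. Qed.

Lemma qd_tri b a c : qd a c <= qd a b + qd b c.
Proof. exact: rho_tri. Qed.

HB.instance Definition _ := isMetric.Build R Q qdxx qd_pos qd_sym qd_tri.

Lemma qd_qpi x y : qd (qpi x) (qpi y) = rho (x - y).
Proof.
by apply: esym; apply: rho_congr; rewrite ?rho_val_qpi.
Qed.


Lemma qsub_cont : continuous (fun p : Q * Q => p.1 - p.2).
Proof.
move=> [a b]; apply/metricType_numDomainType.cvgrPdist_lt => e e0.
have e20 : 0 < e / 2 by rewrite divr_gt0.
exists ([set c | mdist a c < e / 2], [set d | mdist b d < e / 2]) => /=.
  split; rewrite -metricType_numDomainType.filter_from_mdist_nbhs;
  by exists (e / 2).
move=> [c d] [/= hc hd].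
have E1 : forall u v : Q, u - v = qpi (val u - val v).
  by move=> u v; rewrite qpiD qpiN !qpi_val.
rewrite (E1 a b) (E1 c d); change (qd (qpi (val a - val b)) (qpi (val c - val d)) < e).
rewrite qd_qpi.
rewrite (_ : (val a - val b) - (val c - val d) = (val a - val c) + (val d - val b)); last first.
  by rewrite opprB addrACA [X in _ = X]addrACA [- val b + _]addrC.
apply: (le_lt_trans (rhoD _ _)); rewrite [e]splitr ltrD //.
by move: hd; change (qd b d < e / 2 -> rho (val d - val b) < e / 2); rewrite /qd rhoB_sym.
Qed.

HB.instance Definition _ := PreTopologicalNmodule_isTopologicalZmodule.Build Q qsub_cont.

Lemma Q_metrizes : metrizes (qd : Q -> Q -> R).
Proof.
split.
  split.
  - by move=> a b; exact: (@mdist_ge0 R Q).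
  - by move=> a b; split; [exact: qd_pos| move=> ->; exact: qdxx].
  - exact: qd_sym.
  - by move=> a b c; exact: qd_tri.
move=> x A; rewrite -metricType_numDomainType.filter_from_mdist_nbhs.
by split => -[e e0 h]; exists e.
Qed.

Hypothesis rho_cont : forall e : R, 0 < e -> \forall h \near (0:H), rho h < e.

Lemma qpi_cont : continuous qpi.
Proof.
move=> x; apply/metricType_numDomainType.cvgrPdist_lt => e e0.
have hc : (fun y => x - y) @ x --> (0:H).
  rewrite -(subrr x).
  have h1 : (fun y => (x, y)) @ x --> (x, x).
    by apply: cvg_pair; [exact: cvg_cst | exact: cvg_id].
  exact: (cvg_comp _ _ h1 (@sub_continuous H (x, x))).
have := hc [set h | rho h < e] (@rho_cont e e0).
move=> HH.
have HH' : \forall y \near x, rho (x - y) < e := HH.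
near=> y.
change (qd (qpi x) (qpi y) < e); rewrite qd_qpi.
exact: (near HH' y).
Unshelve. all: end_near.
Qed.

End Quot.

Section NR.
Context {R : realType}.
Definition nr (z : Cplx R) : R := complex.Re `|z|.
Lemma normCE (z : Cplx R) : `|z| = (nr z)%:C.
Proof. by rewrite /nr RRe_real // normr_real. Qed.
Lemma nr_ge0 z : 0 <= nr z.
Proof. by have := normr_ge0 z; rewrite normCE lecR. Qed.
Lemma nrD (a b : Cplx R) : nr (a + b) <= nr a + nr b.
Proof. by have := ler_normD a b; rewrite !normCE -rmorphD lecR. Qed.
Lemma nrN (a : Cplx R) : nr (- a) = nr a.
Proof. by rewrite /nr normrN. Qed.
Lemma nr_lt (z : Cplx R) (e : R) : (`|z| < e%:C) = (nr z < e).
Proof. by rewrite normCE ltcR. Qed.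
Lemma posC (e : Cplx R) : 0 < e -> e = (complex.Re e)%:C /\ 0 < complex.Re e.
Proof. by case: e => a b; rewrite ltcE /= => /andP[/eqP -> ha]; split. Qed.
Lemma nr0 (z : Cplx R) : (nr z = 0) -> z = 0.
Proof. by move=> h; apply/normr0_eq0; rewrite normCE h. Qed.
Lemma nrC (r : R) : nr (r%:C) = `|r|.
Proof. by rewrite /nr normc_def /= expr0n /= addr0 sqrtr_sqr. Qed.
Lemma nr00 : nr 0 = 0.
Proof. by rewrite /nr normr0. Qed.
Lemma nr_tri (a b c : Cplx R) : nr (a - c) <= nr (a - b) + nr (b - c).
Proof. by rewrite (_ : a - c = (a - b) + (b - c)) ?nrD // addrA subrK. Qed.

Lemma contP {T : topologicalType} {g : T -> Cplx R} {x} : {for x, continuous g} ->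
  forall e : R, 0 < e -> \forall y \near x, nr (g x - g y) < e.
Proof.
move=> /cvgrPdist_lt h e e0.
have := h (e%:C); rewrite ltcR => /(_ e0) h'.
near=> y; rewrite -nr_lt; exact: (near h' y).
Unshelve. all: end_near.
Qed.

Lemma contP' {T : topologicalType} {g : T -> Cplx R} {x} :
  (forall e : R, 0 < e -> \forall y \near x, nr (g x - g y) < e) ->
  {for x, continuous g}.
Proof.
move=> h; apply/cvgrPdist_lt => e e0; have [-> he] := @posC e e0.
have h' := h _ he.
near=> y; rewrite nr_lt; exact: (near h' y).
Unshelve. all: end_near.
Qed.
End NR.

Section Unif.
Context (R : realType) (H : topologicalZmodType) (g : H -> Cplx R) (K : set H)
  (gc : continuous g) (cK : compact K) (g0 : forall z, ~ K z -> g z = 0).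

Lemma unif_cont (e : R) : 0 < e ->
  \forall h \near (0:H), forall z, nr (g (z + h) - g z) < e.
Proof.
move=> e0; have e20 : 0 < e / 2 by rewrite divr_gt0.
have A : \forall h \near (0:H), forall z, K z -> nr (g (z + h) - g z) < e.
  move: cK => /compact_near_coveringP cov.
  apply: (cov H (nbhs (0:H)) (fun h z => nr (g (z + h) - g z) < e)) => z Kz.
  have hz := contP (gc z) _ e20.
  have hz' : nbhs (z + 0) [set y | nr (g z - g y) < e / 2] by rewrite addr0.
  have [[A B] /= [nA nB] hAB] := @add_continuous H (z, 0) _ hz'.
  exists (A `&` [set y | nr (g z - g y) < e / 2], B); first by split => //; exact: filterI.
  move=> [x' i] [[Ax' hx'] Bi] /=.
  have := hAB (x', i) (conj Ax' Bi) => /= h1.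
  apply: (le_lt_trans (nr_tri _ (g z) _)); rewrite [e]splitr ltrD //.
  by rewrite -nrN opprB.
have B : \forall h \near (0:H), forall z, K z -> nr (g (z + - h) - g z) < e.
  have A' : nbhs (- (0:H)) [set h | forall z, K z -> nr (g (z + h) - g z) < e].
    by rewrite oppr0.
  exact: (@opp_continuous H 0 _ A').
near=> h => z.
case: (pselect (K z)) => [Kz|nKz]; first exact: (near A h).
case: (pselect (K (z + h))) => [Kzh|nKzh].
  have hb : forall z, K z -> nr (g (z - h) - g z) < e by exact: (near B h).
  have := hb _ Kzh; rewrite addrK => hh.
  by rewrite -nrN opprB.
by rewrite !g0 // subrr nr00.
Unshelve. all: end_near.
Qed.
End Unif.

Lemma near_all_lt (T : Type) (F : set_system T) {FF : Filter F}
  (P : nat -> T -> Prop) N :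
  (forall n, F (P n)) -> \forall x \near F, forall n, (n < N)%N -> P n x.
Proof.
move=> hP; elim: N => [|N IH].
  by near=> x => n.
have hN : \forall x \near F, P N x := hP N.
near=> x => n.
have hi : forall n, (n < N)%N -> P n x by exact: (near IH x).
have hx : P N x by exact: (near hN x).
by rewrite ltnS leq_eqVlt => /orP[/eqP->|/hi].
Unshelve. all: end_near.
Qed.

Section Rho.
Context (R : realType) (H : topologicalZmodType) (g : nat -> H -> Cplx R) (B : R)
  (gB : forall n x, nr (g n x) <= B)
  (gU : forall n e, 0 < e -> \forall h \near (0:H), forall z, nr (g n (z + h) - g n z) < e).

Definition Tq (x : H) (p : nat * H) : R := nr (g p.1 (p.2 + x) - g p.1 p.2) / p.1.+1%:R.
Definition rho (x : H) : R := sup (range (Tq x)).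

Lemma B_ge0 : 0 <= B.
Proof. exact: le_trans (nr_ge0 _) (gB 0 0). Qed.

Lemma div_le (a : R) n : 0 <= a -> a / n.+1%:R <= a.
Proof. by move=> a0; rewrite ler_pdivrMr ?ltr0Sn // ler_peMr // ler1n. Qed.

Lemma Tq_ge0 x p : 0 <= Tq x p.
Proof. by rewrite /Tq divr_ge0 // nr_ge0. Qed.

Lemma Tq_le2B x p : Tq x p <= B + B.
Proof.
rewrite /Tq; apply: le_trans (div_le _ _ (nr_ge0 _)) _.
by apply: le_trans (nrD _ _) _; rewrite lerD // nrN.
Qed.

Lemma has_ub_Tq x : has_ubound (range (Tq x)).
Proof. by exists (B + B) => r [p _ <-]; exact: Tq_le2B. Qed.

Lemma Tq_le_rho x p : Tq x p <= rho x.
Proof. by have := ub_le_sup (has_ub_Tq x); apply; exists p. Qed.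

Lemma rho_le x r : (forall p, Tq x p <= r) -> rho x <= r.
Proof.
move=> h; apply: ge_sup; first by exists (Tq x (0%N, 0)), (0%N, 0).
by move=> _ [p _ <-]; exact: h.
Qed.

Lemma rho_ge0 x : 0 <= rho x.
Proof. exact: le_trans (Tq_ge0 x (0%N, 0)) (Tq_le_rho _ _). Qed.

Lemma rho0 : rho 0 = 0.
Proof.
apply/eqP; rewrite eq_le rho_ge0 andbT; apply: rho_le => p.
by rewrite /Tq addr0 subrr nr00 mul0r.
Qed.

Lemma rhoN_le x : rho (- x) <= rho x.
Proof.
apply: rho_le => -[n z]; apply: le_trans (Tq_le_rho x (n, z - x)).
by rewrite /Tq /= subrK -nrN opprB.
Qed.

Lemma rhoN x : rho (- x) = rho x.
Proof.
by apply/eqP; rewrite eq_le rhoN_le /=; have := rhoN_le (- x); rewrite opprK.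
Qed.

Lemma rhoD x y : rho (x + y) <= rho x + rho y.
Proof.
apply: rho_le => -[n z].
apply: le_trans (lerD (Tq_le_rho x (n, z + y)) (Tq_le_rho y (n, z))).
rewrite /Tq /= -mulrDl ler_pM2r ?invr_gt0 ?ltr0Sn //.
by rewrite -addrA [y + x]addrC nr_tri.
Qed.

Lemma rho_cont e : 0 < e -> \forall h \near (0:H), rho h < e.
Proof.
move=> e0; have e20 : 0 < e / 2 by rewrite divr_gt0.
have [N hN] : exists N : nat, (B + B) / (e / 2) < N.+1%:R.
  by exists (Num.trunc ((B + B) / (e / 2))); exact: truncnS_gt.
have A : \forall h \near (0:H), forall n, (n < N)%N ->
    forall z, nr (g n (z + h) - g n z) < e / 2.
  by apply: near_all_lt => n; exact: gU.
near=> h.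
have hA : forall n, (n < N)%N -> forall z, nr (g n (z + h) - g n z) < e / 2.
  exact: (near A h).
apply: (@le_lt_trans _ _ (e / 2)); last first.
  by rewrite ltr_pdivrMr // ltr_pMr // ltr1n.
apply: rho_le => -[n z]; rewrite /Tq /=.
case: (ltnP n N) => hn.
  apply: le_trans (div_le _ _ (nr_ge0 _)) _; apply: ltW.
  exact: hA.
rewrite ler_pdivrMr ?ltr0Sn //.
have h2B : nr (g n (z + h) - g n z) <= B + B.
  by apply: le_trans (nrD _ _) _; rewrite lerD // nrN.
apply: le_trans h2B _.
move: hN; rewrite ltr_pdivrMr // => /ltW hN; apply: le_trans hN _.
by rewrite mulrC ler_pM2l // ler_nat.
Unshelve. all: end_near.
Qed.

Lemma rho_f n e : 0 < e ->
  exists2 d, 0 < d & forall u v, rho (u - v) < d -> nr (g n u - g n v) < e.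
Proof.
move=> e0; exists (e / n.+1%:R); first by rewrite divr_gt0 ?ltr0Sn.
move=> u v h; have := le_lt_trans (Tq_le_rho (u - v) (n, v)) h.
by rewrite /Tq /= ltr_pM2r ?invr_gt0 ?ltr0Sn // [v + _]addrC subrK.
Qed.
End Rho.
Theorem lemma5p2 (R : realType) (H : topologicalZmodType)
  (H_hausdorff : hausdorff_space H)
  (H_lc : locally_compact [set: H])
  (U : set H) (hU : nbhs (0 : H) U)
  (f : nat -> H -> Cplx R)
  (hfC : forall i, Cc (f i))
  (hfb : exists M : R, forall i x, `|f i x| <= M%:C) :
  exists (Ht : topologicalZmodType) (dt : Ht -> Ht -> R) (phi : H -> Ht),
    metrizes dt /\
    group_hom phi /\
    continuous phi /\
    dense (range phi) /\
    (forall i, exists ft : Ht -> Cplx R, Cc ft /\ f i = ft \o phi) /\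
    (exists Vt : set Ht, nbhs (0 : Ht) Vt /\ phi @^-1` Vt `<=` U).
Proof.
have [M hM] := hfb.
have hM' : forall i x, nr (f i x) <= M by move=> i x; have := hM i x; rewrite normCE lecR.
have M0 : 0 <= M := le_trans (nr_ge0 _) (hM' 0%N 0).
have [V nV0 [cV clV]] := H_lc 0 I.
have nV : nbhs (0:H) V by move: nV0; rewrite withinET.
pose W := interior (U `&` V).
have nW : nbhs (0:H) W by apply: nbhs_interior; apply: filterI.
have WU : W `<=` U by move=> x /interior_subset [].
have WV : W `<=` V by move=> x /interior_subset [].
pose Bs := ~` W.
have clB : closed Bs by apply: open_closedC; exact: open_interior.
have nB0 : ~ Bs 0.
  by move=> h; apply: h; apply: nbhs_singleton.
have sep : uniform_separator [set (0:H)] Bs :=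
  @locally_compact_completely_regular H R H_lc H_hausdorff 0 Bs clB nB0.
pose u := @Urysohn H R [set 0] Bs.
have uc : continuous u := @Urysohn_continuous H R [set 0] Bs.
have u0 : u 0 = 0 by apply: (Urysohn_sub0 sep); exists 0.
have uB : forall x, Bs x -> u x = 1 by move=> x Bx; apply: (Urysohn_sub1 sep); exists x.
have ur : forall x, 0 <= u x <= 1.
  move=> x; have hx : range u (u x) by exists x.
  by have := @Urysohn_range H R [set 0] Bs (u x) hx; rewrite /= in_itv.
pose g0 (x : H) : Cplx R := (1 - u x)%:C.
pose g (n : nat) : H -> Cplx R := if n is n'.+1 then f n' else g0.
have g0c : continuous g0.
  move=> x; apply: contP' => e e0.
  have := uc x; move/cvgrPdist_lt => /(_ e e0) h.
  near=> y; rewrite /g0 -rmorphB nrC.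
  rewrite (_ : 1 - u x - (1 - u y) = u y - u x); last first.
    by rewrite opprB addrC addrA subrK.
  by rewrite distrC; exact: (near h y).
have g0K : forall z, ~ V z -> g0 z = 0.
  move=> z nVz; rewrite /g0 uB; first by rewrite subrr.
  by move=> /WV.
pose B := Num.max M 1.
have gB : forall n x, nr (g n x) <= B.
  case=> [|n] x /=.
    rewrite /g0 nrC; apply: (@le_trans _ _ 1); last by rewrite le_max lexx orbT.
    have /andP[h1 h2] := ur x; rewrite ger0_norm ?subr_ge0 //.
    by rewrite lerBlDr lerDl.
  by apply: le_trans (hM' n x) _; rewrite le_max lexx.
have gU : forall n e, 0 < e ->
    \forall h \near (0:H), forall z, nr (g n (z + h) - g n z) < e.
  case=> [|n] e e0 /=.
    exact: (@unif_cont R H g0 V g0c cV g0K e e0).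
  have [fc fK] := hfC n.
  apply: (@unif_cont R H (f n) (closure [set x | f n x != 0]) fc fK _ e e0).
  move=> z nz; case: (eqVneq (f n z) 0) => // hz; exfalso; apply: nz.
  exact: subset_closure.
pose r1 := @rho_ge0 R H g B gB.
pose r2 := @rho0 R H g B gB.
pose r3 := @rhoN R H g B gB.
pose r4 := @rhoD R H g B gB.
have rc : forall e, 0 < e -> \forall h \near (0:H), rho R H g h < e :=
  @rho_cont R H g B gB gU.
have feq : forall i a b, rho R H g (a - b) = 0 -> f i a = f i b.
  move=> i a b hab; apply/eqP; rewrite -subr_eq0; apply/eqP/nr0.
  apply/eqP; rewrite eq_le nr_ge0 andbT leNgt; apply/negP => hpos.
  have [d d0 hd] := @rho_f R H g B gB i.+1 _ hpos.
  by have := hd a b; rewrite hab => /(_ d0); rewrite ltxx.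
pose dQ := @qd R H (rho R H g) r1 r2 r3 r4.
pose phi := @qpi R H (rho R H g) r1 r2 r3 r4.
have phic : continuous phi := @qpi_cont R H (rho R H g) r1 r2 r3 r4 rc.
have QM := @Q_metrizes R H (rho R H g) r1 r2 r3 r4.
exists (@Q R H (rho R H g) r1 r2 r3 r4).
exists (@qd R H (rho R H g) r1 r2 r3 r4).
exists (@qpi R H (rho R H g) r1 r2 r3 r4).
split; first exact: QM.
split; first by move=> x y; exact: qpiD.
split; first exact: phic.
split.
  move=> O [a Oa] _; exists a; split => //; exists (val a) => //; exact: qpi_val.
split.
  move=> i; exists (fun a => f i (val a)); split; last first.
    apply/funext => x /=; apply: feq; exact: canonP.
  split.
    move=> a; apply: contP' => e e0.
    have [d d0 hd] := @rho_f R H g B gB i.+1 _ e0.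
    have na : nbhs a [set b | dQ a b < d] by apply/(QM.2 a); exists d.
    near=> b; apply: hd; exact: (near na b).
  have [fc fK] := hfC i.
  have cS := continuous_compact (continuous_subspaceT phic) fK.
  have clS := compact_closed (@metric_hausdorff R _) cS.
  rewrite /compact_support; apply: (subclosed_compact _ cS); first exact: closed_closure.
  rewrite [X in _ `<=` X](closure_id _).1 //; apply: closureS => a /= ha.
  exists (val a); [exact: subset_closure | exact: qpi_val].
exists [set a | dQ (phi 0) a < 1]; split.
  by apply/(QM.2 _); exists 1.
move=> x /= hx0; have : dQ (phi 0) (phi x) < 1 := hx0.
rewrite /dQ /phi qd_qpi sub0r r3 => hx.
case: (pselect (W x)) => [/WU //|nWx]; exfalso.
have := le_lt_trans (@Tq_le_rho R H g B gB x (0%N, 0)) hx.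
rewrite /Tq /= add0r /g0 uB // u0 -rmorphB nrC subrr subr0 sub0r normrN normr1.
by rewrite divr1 ltxx.
Unshelve. all: end_near.
Qed.
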